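(* Let the pumping $A_p:\mathbb R\to\mathbb R$ be continuous and $T$-periodic. Consider the Maxwell--Bloch system on $\mathbb X=\mathbb R^2\times S^3$, \[ \dot A=B,\quad \dot B=-\Omega^2A-\sigma B+cj,\quad i\hbar\dot C_1=\hbar\omega_1C_1+iaC_2,\quad i\hbar\dot C_2=\hbar\omega_2C_2-iaC_1, \] with $j=2q\,\mathrm{Im}[\overline{C_1}C_2]$, $a(t)=\frac qc[A(t)+A_p(t)]$, its reduced dynamics $\dot Y=F(Y,t)$ on $\mathbb Y=\mathbb R^2\times S^2$, and let $U(t):\mathbb Y\to\mathbb Y$ be the map sending $Y(0)$ to $Y(t)$ for solutions of the reduced dynamics. Then the set $\Phi=\{Y_\#\in\mathbb Y: U(T)Y_\#=Y_\#\}$ of fixed points of the Poincaré map $U(T)$ is bounded in $\mathbb Y$.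
   Context: Parameters: $\Omega,\sigma,c,\hbar,p>0$, real $\omega_2>\omega_1$, $\omega=\omega_2-\omega_1$, $q=\omega p$. $S^3=\{C=(C_1,C_2)\in\mathbb C^2:|C_1|^2+|C_2|^2=1\}$. $U(1)$ acts on $\mathbb X$ by $(A,B,C)\mapsto(A,B,e^{i\theta}C)$, commuting with the flow. The map $\Pi(A,B,C)=(A,B,h(C))$, with $h:S^3\to S^2$ the Hopf fibration, identifies $\mathbb X/U(1)$ with $\mathbb Y=\mathbb R^2\times S^2$; the reduced dynamics is the induced time-dependent vector field on $\mathbb Y$, and boundedness refers to the $\mathbb R^2$ component $(A,B)$ (the $S^2$ factor is compact). *)

(* Defs.v *)
From Stdlib Require Import Reals.
From Coquelicot Require Import Coquelicot.

Open Scope R_scope.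

Definition qMB (omega1 omega2 p : R) : R := (omega2 - omega1) * p.

Definition jMB (q : R) (C1 C2 : C) : R := 2 * q * Im (Cmult (Cconj C1) C2).

Definition aMB (q c : R) (Ap A : R -> R) (t : R) : R := q / c * (A t + Ap t).

Definition on_S3 (C1 C2 : C) : Prop := Cmod C1 ^ 2 + Cmod C2 ^ 2 = 1.

(* Hopf fibration h : S^3 -> S^2 subset R^3; h C = h C' iff C' = e^{i theta} C on S^3 *)
Definition hopf (C1 C2 : C) : R * R * R :=
  (2 * Re (Cmult (Cconj C1) C2), 2 * Im (Cmult (Cconj C1) C2),
   Cmod C1 ^ 2 - Cmod C2 ^ 2).

Definition MB_solution (Omega sigma c hbar p omega1 omega2 : R) (Ap : R -> R)
    (A B : R -> R) (C1 C2 : R -> C) : Prop :=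
  let q := qMB omega1 omega2 p in
  forall t : R,
    on_S3 (C1 t) (C2 t) /\
    is_derive A t (B t) /\
    is_derive B t (- Omega ^ 2 * A t - sigma * B t + c * jMB q (C1 t) (C2 t)) /\
    (exists dC1 : C, is_derive C1 t dC1 /\
       Cmult (Cmult Ci (RtoC hbar)) dC1 =
       Cplus (Cmult (RtoC (hbar * omega1)) (C1 t))
             (Cmult (Cmult Ci (RtoC (aMB q c Ap A t))) (C2 t))) /\
    (exists dC2 : C, is_derive C2 t dC2 /\
       Cmult (Cmult Ci (RtoC hbar)) dC2 =
       Cminus (Cmult (RtoC (hbar * omega2)) (C2 t))
              (Cmult (Cmult Ci (RtoC (aMB q c Ap A t))) (C1 t))).

(* Points of Y = R^2 x S^2 (S^2 as the image of hopf in R^3). *)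
Definition Ypt : Type := (R * R * (R * R * R))%type.

Definition PiMB (A B : R) (C1 C2 : C) : Ypt := (A, B, hopf C1 C2).

(* Y# is a fixed point of the Poincare map U(T) of the reduced dynamics:
   the reduced trajectory through Y# is the projection of a lifted solution
   of the full system, and U(T) Y# = Y#. *)
Definition poincare_fixed (Omega sigma c hbar p omega1 omega2 T : R)
    (Ap : R -> R) (Y : Ypt) : Prop :=
  exists (A B : R -> R) (C1 C2 : R -> C),
    MB_solution Omega sigma c hbar p omega1 omega2 Ap A B C1 C2 /\
    PiMB (A 0) (B 0) (C1 0) (C2 0) = Y /\
    PiMB (A T) (B T) (C1 T) (C2 T) = Y.

(* Main.v *)
Require Import Defs.
From Stdlib Require Import Reals Lra Psatz.
From Coquelicot Require Import Coquelicot.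
Open Scope R_scope.

Lemma key_ineq (s W d K2 a b f : R) :
  0 < s -> 0 < W -> 0 < d -> d <= s -> d <= W -> d * s <= W ^ 2 ->
  f ^ 2 <= K2 ->
  (2 * b * (- W ^ 2 * a - s * b + f) + W ^ 2 * (2 * a * b)
    + d * (b * b + a * (- W ^ 2 * a - s * b + f)))
  + d / 6 * (b * b + W ^ 2 * (a * a) + d * (a * b))
  - K2 * (4 / s + d / W ^ 2) <= 0.
Proof.
  intros hs hW hd hds hdW hdsW hf.
  assert (h1 : - (d * s * a * b) <= s / 2 * b ^ 2 + d * W ^ 2 / 2 * a ^ 2).
  { assert (0 <= s / 2 * (b + d * a) ^ 2) by (apply Rmult_le_pos; [lra| apply pow2_ge_0]).
    assert (0 <= (d / 2) * (W ^ 2 - s * d) * a ^ 2).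
    { apply Rmult_le_pos; [apply Rmult_le_pos; lra| apply pow2_ge_0]. }
    nra. }
  assert (h2 : 2 * b * f <= s / 4 * b ^ 2 + 4 * f ^ 2 / s).
  { assert (0 <= s / 4 * (b - 4 * f / s) ^ 2) by (apply Rmult_le_pos; [lra| apply pow2_ge_0]).
    replace (s / 4 * (b - 4 * f / s) ^ 2) with (s / 4 * b ^ 2 - 2 * b * f + 4 * f ^ 2 / s) in H
      by (field; lra). lra. }
  assert (h3 : d * a * f <= d * W ^ 2 / 4 * a ^ 2 + d * f ^ 2 / W ^ 2).
  { assert (0 <= d * (W ^ 2 / 4) * (a - 2 * f / W ^ 2) ^ 2).
    { apply Rmult_le_pos; [apply Rmult_le_pos; [lra| nra]| apply pow2_ge_0]. }
    replace (d * (W ^ 2 / 4) * (a - 2 * f / W ^ 2) ^ 2) with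
      (d * W ^ 2 / 4 * a ^ 2 - d * a * f + d * f ^ 2 / W ^ 2) in H by (field; lra). lra. }
  assert (h4 : d * (a * b) <= / 2 * (b * b + W ^ 2 * (a * a))).
  { assert (0 <= (b - d * a) ^ 2) by apply pow2_ge_0.
    assert (0 <= (W ^ 2 - d ^ 2) * a ^ 2).
    { apply Rmult_le_pos; [nra| apply pow2_ge_0]. } nra. }
  assert (h5 : f ^ 2 * (4 / s + d / W ^ 2) <= K2 * (4 / s + d / W ^ 2)).
  { apply Rmult_le_compat_r; [|lra].
    assert (0 < 4 / s) by (apply Rdiv_lt_0_compat; lra).
    assert (0 < d / W ^ 2) by (apply Rdiv_lt_0_compat; nra). lra. }
  assert (e1 : 4 * f ^ 2 / s + d * f ^ 2 / W ^ 2 = f ^ 2 * (4 / s + d / W ^ 2))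
    by (field; lra).
  assert (hb : 0 <= b ^ 2) by apply pow2_ge_0.
  assert (ha : 0 <= W ^ 2 * a ^ 2) by (apply Rmult_le_pos; apply pow2_ge_0).
  assert (h6 : d / 6 * (b * b + W ^ 2 * (a * a) + d * (a * b))
               <= d / 4 * (b * b + W ^ 2 * (a * a))).
  { assert (0 <= b * b + W ^ 2 * (a * a)) by nra.
    assert (d / 6 * (d * (a * b)) <= d / 6 * (/ 2 * (b * b + W ^ 2 * (a * a)))).
    { apply Rmult_le_compat_l; lra. } nra. }
  assert (h7 : (s - d) * b ^ 2 >= 0) by nra.
  nra.
Qed.

Lemma V_lower (W d a b : R) : 0 < W -> 0 < d -> d <= W ->
  / 2 * (b * b + W ^ 2 * (a * a)) <= b * b + W ^ 2 * (a * a) + d * (a * b).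
Proof.
  intros. assert (0 <= (b + d * a) ^ 2) by apply pow2_ge_0.
  assert (0 <= (W ^ 2 - d ^ 2) * a ^ 2) by (apply Rmult_le_pos; [nra| apply pow2_ge_0]).
  nra.
Qed.

Lemma deriv_val (f : R -> R) x l l' : is_derive f x l -> l = l' -> is_derive f x l'.
Proof. intros H <-; exact H. Qed.

Theorem lemma4p2 (Omega sigma c hbar p omega1 omega2 T : R) (Ap : R -> R) :
  0 < Omega -> 0 < sigma -> 0 < c -> 0 < hbar -> 0 < p -> omega1 < omega2 ->
  0 < T ->
  (forall t : R, continuity_pt Ap t) ->
  (forall t : R, Ap (t + T) = Ap t) ->
  exists M : R, forall Y : Ypt,
    poincare_fixed Omega sigma c hbar p omega1 omega2 T Ap Y ->
    Rabs (fst (fst Y)) <= M /\ Rabs (snd (fst Y)) <= M.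
Proof.
  intros hO hs hc hh hp hw hT _ _.
  set (q := qMB omega1 omega2 p).
  set (d := Rmin sigma (Rmin Omega (Omega ^ 2 / sigma))).
  assert (hd0 : 0 < d).
  { unfold d. apply Rmin_pos; [lra| apply Rmin_pos; [lra|]].
    apply Rdiv_lt_0_compat; nra. }
  assert (hds : d <= sigma) by apply Rmin_l.
  assert (hdW : d <= Omega) by (eapply Rle_trans; [apply Rmin_r| apply Rmin_l]).
  assert (hdsW : d * sigma <= Omega ^ 2).
  { assert (d <= Omega ^ 2 / sigma) by
      (eapply Rle_trans; [apply Rmin_r| apply Rmin_r]).
    apply Rmult_le_compat_r with (r := sigma) in H; [|lra].
    replace (Omega ^ 2 / sigma * sigma) with (Omega ^ 2) in H by (field; lra). lra. }
  set (K2 := c ^ 2 * q ^ 2).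
  set (al := d / 6).
  set (be := K2 * (4 / sigma + d / Omega ^ 2)).
  assert (hal : 0 < al) by (unfold al; lra).
  assert (hbe : 0 <= be).
  { unfold be, K2. apply Rmult_le_pos; [nra|].
    assert (0 < 4 / sigma) by (apply Rdiv_lt_0_compat; lra).
    assert (0 < d / Omega ^ 2) by (apply Rdiv_lt_0_compat; nra). lra. }
  exists (1 + 2 * (be / al) + 2 * (be / al) / Omega ^ 2).
  intros Y [A [B [C1 [C2 [Hsol [HY0 HYT]]]]]].
  rewrite <- HYT in HY0. unfold PiMB in HY0.
  injection HY0 as EA EB _.
  rewrite <- HYT. simpl.
  assert (Hf : forall t, (c * jMB q (C1 t) (C2 t)) ^ 2 <= K2).
  { intro t. destruct (Hsol t) as [HS _]. unfold on_S3 in HS.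
    rewrite !Cmod2_alt in HS. unfold jMB, K2.
    destruct (C1 t) as [x1 y1]; destruct (C2 t) as [x2 y2].
    simpl in HS |- *.
    set (I := x1 * y2 + - y1 * x2).
    assert (4 * I ^ 2 <= 1).
    { assert (I ^ 2 <= (x1 ^ 2 + y1 ^ 2) * (x2 ^ 2 + y2 ^ 2)).
      { unfold I. assert (0 <= (x1 * x2 + y1 * y2) ^ 2) by apply pow2_ge_0. nra. }
      assert (0 <= (x1 ^ 2 + y1 ^ 2 - (x2 ^ 2 + y2 ^ 2)) ^ 2) by apply pow2_ge_0.
      nra. }
    assert (0 <= c ^ 2 * q ^ 2) by nra.
    replace ((c * (2 * q * (x1 * y2 + - y1 * x2))) ^ 2) with (c ^ 2 * q ^ 2 * (4 * I ^ 2))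
      by (unfold I; ring).
    nra. }
  set (V := fun t => B t * B t + Omega ^ 2 * (A t * A t) + d * (A t * B t)).
  set (G := fun t => exp (al * t) * (V t - be / al)).
  set (dB := fun t => - Omega ^ 2 * A t - sigma * B t + c * jMB q (C1 t) (C2 t)).
  set (dV := fun t => 2 * B t * dB t + Omega ^ 2 * (2 * A t * B t)
                      + d * (B t * B t + A t * dB t)).
  assert (HV : forall t, is_derive V t (dV t)).
  { intro t. destruct (Hsol t) as [_ [HA [HB _]]].
    fold q in HB. fold (dB t) in HB.
    pose proof (is_derive_mult B B t _ _ HB HB Rmult_comm) as h1.
    pose proof (is_derive_mult A A t _ _ HA HA Rmult_comm) as h2.
    pose proof (is_derive_mult A B t _ _ HA HB Rmult_comm) as h3.
    apply (is_derive_scal _ _ (Omega ^ 2)) in h2.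
    apply (is_derive_scal _ _ d) in h3.
    pose proof (is_derive_plus _ _ _ _ _ (is_derive_plus _ _ _ _ _ h1 h2) h3) as h4.
    eapply is_derive_ext; [|eapply deriv_val; [exact h4|]].
    - intro u. simpl. unfold plus, mult; simpl. reflexivity.
    - unfold dV, plus, mult; simpl. ring. }
  set (dG := fun t => exp (al * t) * (al * (V t - be / al) + dV t)).
  assert (HG : forall t, is_derive G t (dG t)).
  { intro t.
    pose proof (is_derive_scal _ _ al _ (is_derive_id t)) as e1.
    pose proof (is_derive_comp exp (fun t => al * t) t _ _ (is_derive_exp _) e1) as e2.
    pose proof (is_derive_minus _ _ t _ _ (HV t) (is_derive_const (be / al) t)) as e3.
    pose proof (is_derive_mult _ _ t _ _ e2 e3 Rmult_comm) as e4.
    eapply is_derive_ext; [|eapply deriv_val; [exact e4|]].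
    - intro u. unfold G, minus, plus, opp, mult; simpl. reflexivity.
    - unfold dG, minus, plus, opp, mult, scal, zero; simpl. unfold mult, one; simpl. ring. }
  assert (HdG : forall t, dG t <= 0).
  { intro t. unfold dG.
    rewrite <- (Rmult_0_r (exp (al * t))).
    apply Rmult_le_compat_l; [left; apply exp_pos|].
    replace (al * (V t - be / al) + dV t) with
      ((2 * B t * (- Omega ^ 2 * A t - sigma * B t + c * jMB q (C1 t) (C2 t))
        + Omega ^ 2 * (2 * A t * B t)
        + d * (B t * B t + A t * (- Omega ^ 2 * A t - sigma * B t + c * jMB q (C1 t) (C2 t))))
       + d / 6 * (B t * B t + Omega ^ 2 * (A t * A t) + d * (A t * B t))
       - K2 * (4 / sigma + d / Omega ^ 2)).
    - apply key_ineq; auto.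
    - unfold dV, dB, V, al, be. field. lra. }
  destruct (MVT_gen G 0 T dG) as [xi [_ Hxi]].
  { intros x _. apply HG. }
  { intros x _. apply continuity_pt_filterlim.
    apply (ex_derive_continuous G). eexists; apply HG. }
  assert (HVT : V T = V 0) by (unfold V; rewrite EA, EB; reflexivity).
  assert (Hexp : 1 < exp (al * T)).
  { rewrite <- exp_0. apply exp_increasing. nra. }
  assert (HV0 : V 0 <= be / al).
  { assert (HGT : G T - G 0 <= 0).
    { rewrite Hxi. pose proof (HdG xi). nra. }
    unfold G in HGT; cbv beta in HGT. rewrite HVT, Rmult_0_r, exp_0 in HGT. nra. }
  pose proof (V_lower Omega d (A 0) (B 0) hO hd0 hdW) as HL.
  fold (V 0) in HL.
  assert (hbal : 0 <= be / al) by (apply Rdiv_le_0_compat; lra).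
  assert (HA2 : A 0 * A 0 <= 2 * (be / al) / Omega ^ 2).
  { apply Rmult_le_reg_r with (r := Omega ^ 2); [nra|].
    replace (2 * (be / al) / Omega ^ 2 * Omega ^ 2) with (2 * (be / al)) by (field; lra).
    nra. }
  assert (hO2 : 0 <= 2 * (be / al) / Omega ^ 2) by (apply Rdiv_le_0_compat; nra).
  assert (Hab : forall x, Rabs x <= 1 + x * x).
  { intro x. unfold Rabs; destruct (Rcase_abs x); nra. }
  rewrite <- EA, <- EB. replace (Omega * (Omega * 1)) with (Omega ^ 2) by ring. split.
  - pose proof (Hab (A 0)). lra.
  - pose proof (Hab (B 0)). assert (0 <= Omega ^ 2 * (A 0 * A 0)) by (apply Rmult_le_pos; nra). lra.
Qed.
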